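(* Let $x,y\in\mathbb{H}^2$ with $d(x,\partial\mathbb{H}^2)=d(y,\partial\mathbb{H}^2)=d$. (1) If $|x-y|>2d$, then $\tilde\tau_{\mathbb{H}^2}(x,y)=\log\Big(1+\sqrt{\tfrac{|x-y|}{d}}\Big)$. (2) If $|x-y|\le 2d$, then $\tilde\tau_{\mathbb{H}^2}(x,y)=\log\Big(1+\tfrac{2|x-y|}{\sqrt{4d^2+|x-y|^2}}\Big)$.
   Context: $\mathbb{H}^n=\{(x_1,\dots,x_n)\in\mathbb{R}^n: x_n>0\}$ is the upper half space, with boundary $\partial\mathbb{H}^n=\{x_n=0\}$ (in $\mathbb{R}^n$); $d(x,\partial D)$ is the Euclidean distance from $x$ to $\partial D$. For a proper subdomain $D\subsetneq\mathbb{R}^n$ and $x,y\in D$, $\tilde\tau_D(x,y)=\log\big(1+\sup_{p\in\partial D}\frac{|x-y|}{\sqrt{|x-p||y-p|}}\big)$ (the scale invariant Cassinian metric). *)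

(* Defs.v *)
From Stdlib Require Import Reals Lra ClassicalEpsilon.
Open Scope R_scope.

Definition pt := (R * R)%type.

Definition dist2 (x y : pt) : R :=
  sqrt ((fst x - fst y)^2 + (snd x - snd y)^2).

(* Upper half plane H^2 = {x_2 > 0}; its boundary in R^2 is {x_2 = 0}. *)
Definition in_H2 (x : pt) : Prop := 0 < snd x.
Definition in_bdry_H2 (p : pt) : Prop := snd p = 0.

(* Supremum of a set of reals (classical choice of a least upper bound;
   an arbitrary value 0 if no lub exists). *)
Definition Rsup (E : R -> Prop) : R :=
  match excluded_middle_informative (exists l, is_lub E l) with
  | left H => proj1_sig (constructive_indefinite_description _ H)
  | right _ => 0
  end.

Definition Rinf (E : R -> Prop) : R := - Rsup (fun r => E (- r)).

Definition dist_bdry_H2 (x : pt) : R :=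
  Rinf (fun r => exists p : pt, in_bdry_H2 p /\ r = dist2 x p).

Definition tau_H2 (x y : pt) : R :=
  ln (1 + Rsup (fun r => exists p : pt, in_bdry_H2 p /\
         r = dist2 x y / sqrt (dist2 x p * dist2 y p))).

(* Main.v *)
Require Import Defs.
From Stdlib Require Import Reals.
From Stdlib Require Import Lra Psatz ClassicalEpsilon.
Open Scope R_scope.

Lemma Rsup_eq (E : R -> Prop) l : is_lub E l -> Rsup E = l.
Proof.
  intros H. unfold Rsup. destruct (ClassicalEpsilon.excluded_middle_informative _) as [e|n].
  - destruct (constructive_indefinite_description _ e) as [l' Hl']. simpl.
    destruct H as [H1 H2], Hl' as [H3 H4]. apply Rle_antisym; auto.
  - exfalso; apply n; eauto.
Qed.

Lemma dist_bdry (x : pt) : 0 < snd x -> dist_bdry_H2 x = snd x.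
Proof.
  intros Hx. unfold dist_bdry_H2, Rinf. rewrite (Rsup_eq _ (- snd x)); [ring|].
  split.
  - intros r [p [Hp Hr]]. unfold dist2 in Hr. unfold in_bdry_H2 in Hp.
    rewrite Hp in Hr. destruct x as [x1 x2], p as [p1 p2]; cbn [fst snd] in *.
    assert (H : sqrt (x2^2) <= sqrt ((x1 - p1) ^ 2 + (x2 - 0) ^ 2)).
    { apply sqrt_le_1_alt. pose proof (pow2_ge_0 (x1-p1)). replace (x2-0) with x2 by ring. lra. }
    rewrite sqrt_pow2 in H by lra. lra.
  - intros b Hb. apply Hb. exists (fst x, 0). split; [reflexivity|].
    unfold dist2; cbn [fst snd].
    replace ((fst x - fst x) ^ 2 + (snd x - 0) ^ 2) with (snd x ^ 2) by ring.
    rewrite sqrt_pow2; lra.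
Qed.

Lemma key (a b d L M : R) : 0 < d -> 0 <= L -> 0 < M ->
  (forall t, M^2 <= ((a-t)^2+d^2)*((b-t)^2+d^2)) ->
  (exists t, M^2 = ((a-t)^2+d^2)*((b-t)^2+d^2)) ->
  is_lub (fun r => exists p:pt, in_bdry_H2 p /\
     r = L / sqrt (dist2 (a,d) p * dist2 (b,d) p)) (L / sqrt M).
Proof.
  intros Hd HL HM Hall [t0 Ht0].
  assert (Hp : forall t, dist2 (a,d) (t,0) * dist2 (b,d) (t,0)
               = sqrt (((a-t)^2+d^2)*((b-t)^2+d^2))).
  { intros t. unfold dist2; cbn [fst snd]. pose proof (pow2_ge_0 (a-t)); pose proof (pow2_ge_0 (b-t)); pose proof (pow2_ge_0 d). rewrite <- sqrt_mult by (replace (d-0) with d by ring; lra).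
    replace (d - 0) with d by ring. reflexivity. }
  split.
  - intros r [[p1 p2] [Hb Hr]]. unfold in_bdry_H2 in Hb; simpl in Hb. subst p2.
    rewrite Hp in Hr. subst r.
    assert (H1 : M <= sqrt (((a-p1)^2+d^2)*((b-p1)^2+d^2))).
    { rewrite <- (sqrt_pow2 M) by lra. apply sqrt_le_1_alt. apply Hall. }
    assert (H2 : sqrt M <= sqrt (sqrt (((a-p1)^2+d^2)*((b-p1)^2+d^2)))).
    { apply sqrt_le_1_alt. exact H1. }
    assert (H3 : 0 < sqrt M) by (apply sqrt_lt_R0; lra).
    unfold Rdiv. apply Rmult_le_compat_l; auto.
    apply Rinv_le_contravar; auto.
  - intros u Hu. apply Hu. exists (t0, 0). split; [reflexivity|].
    rewrite Hp, <- Ht0, sqrt_pow2 by lra. reflexivity.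
Qed.

Lemma sq_eq x y : 0 <= x -> 0 <= y -> x * x = y * y -> x = y.
Proof. intros. apply Rsqr_inj; unfold Rsqr; auto. Qed.

Theorem lemma3p9 (x y : pt) (d : R) :
  in_H2 x -> in_H2 y ->
  dist_bdry_H2 x = d -> dist_bdry_H2 y = d ->
  (dist2 x y > 2 * d ->
     tau_H2 x y = ln (1 + sqrt (dist2 x y / d))) /\
  (dist2 x y <= 2 * d ->
     tau_H2 x y = ln (1 + 2 * dist2 x y / sqrt (4 * d ^ 2 + (dist2 x y) ^ 2))).
Proof.
  intros Hx Hy Hdx Hdy.
  rewrite dist_bdry in Hdx by exact Hx. rewrite dist_bdry in Hdy by exact Hy.
  unfold in_H2 in *. destruct x as [a dx], y as [b dy]. cbn [fst snd] in *.
  subst dx dy.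
  assert (HL0 : 0 <= dist2 (a,d) (b,d)) by (unfold dist2; apply sqrt_pos).
  assert (HL2 : dist2 (a,d) (b,d) * dist2 (a,d) (b,d) = (a-b)^2).
  { unfold dist2; cbn [fst snd]. pose proof (pow2_ge_0 (a-b)); pose proof (pow2_ge_0 (d-d)). rewrite sqrt_sqrt by lra. ring. }
  unfold tau_H2.
  set (L := dist2 (a,d) (b,d)) in *.
  split.
  - intros HL.
    erewrite Rsup_eq; [| apply (key a b d L (L*d)); try lra].
    + f_equal. f_equal.
      assert (Hs := sqrt_sqrt (L*d) ltac:(nra)).
      assert (Hs0 : 0 < sqrt (L*d)) by (apply sqrt_lt_R0; nra).
      assert (Hr := sqrt_sqrt (L/d) ltac:(apply Rlt_le, Rdiv_lt_0_compat; lra)).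
      apply sq_eq.
      * apply Rlt_le, Rdiv_lt_0_compat; lra.
      * apply sqrt_pos.
      * rewrite Hr. replace (L / sqrt (L*d) * (L / sqrt (L*d))) with (L*L/(sqrt (L*d) * sqrt (L*d))) by (field; lra).
        rewrite Hs. field. split; lra.
    + nra.
    + intros t.
      assert (Hid : ((a-t)^2+d^2)*((b-t)^2+d^2) - (a-b)^2*d^2
                    = ((t-(a+b)/2)^2 - (a-b)^2/4 + d^2)^2) by field.
      replace ((L*d)^2) with ((a-b)^2*d^2) by (rewrite <- HL2; ring).
      pose proof (pow2_ge_0 ((t-(a+b)/2)^2 - (a-b)^2/4 + d^2)). lra.
    + set (q := sqrt ((a-b)^2/4 - d^2)).
      assert (Hq : q * q = (a-b)^2/4 - d^2).
      { unfold q. apply sqrt_sqrt. nra. }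
      exists ((a+b)/2 + q).
      assert (Hid : ((a-((a+b)/2+q))^2+d^2)*((b-((a+b)/2+q))^2+d^2) - (a-b)^2*d^2
                    = (q*q - (a-b)^2/4 + d^2)^2) by field.
      rewrite Hq in Hid.
      replace ((a - b) ^ 2 / 4 - d ^ 2 - (a - b) ^ 2 / 4 + d ^ 2) with 0 in Hid by ring.
      nra.
  - intros HL.
    erewrite Rsup_eq; [| apply (key a b d L (L*L/4 + d*d)); try lra].
    + f_equal. f_equal.
      assert (Hs := sqrt_sqrt (L*L/4 + d*d) ltac:(nra)).
      assert (Hs0 : 0 < sqrt (L*L/4 + d*d)) by (apply sqrt_lt_R0; nra).
      assert (Hw := sqrt_sqrt (4 * d^2 + L^2) ltac:(nra)).
      assert (Hw0 : 0 < sqrt (4 * d^2 + L^2)) by (apply sqrt_lt_R0; nra).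
      apply sq_eq.
      * apply Rmult_le_pos; [lra|]. apply Rlt_le, Rinv_0_lt_compat; lra.
      * apply Rmult_le_pos; [lra|]. apply Rlt_le, Rinv_0_lt_compat; lra.
      * replace (L / sqrt (L*L/4 + d*d) * (L / sqrt (L*L/4 + d*d))) with (L*L/(sqrt (L*L/4 + d*d) * sqrt (L*L/4 + d*d))) by (field; lra).
        replace (2 * L / sqrt (4 * d^2 + L^2) * (2 * L / sqrt (4 * d^2 + L^2))) with (4*(L*L)/(sqrt (4 * d^2 + L^2) * sqrt (4 * d^2 + L^2))) by (field; lra).
        rewrite Hs, Hw. field; repeat split; nra.
    + nra.
    + intros t.
      assert (Hid : ((a-t)^2+d^2)*((b-t)^2+d^2) - ((a-b)^2/4 + d*d)^2
                    = ((t-(a+b)/2)^2)^2 + 2*(t-(a+b)/2)^2*(d*d - (a-b)^2/4)) by field.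
      replace (L*L/4 + d*d) with ((a-b)^2/4 + d*d) by (rewrite HL2; ring).
      assert (H1 : 0 <= d*d - (a-b)^2/4) by (rewrite <- HL2; nra).
      assert (H2 : 0 <= (t-(a+b)/2)^2) by apply pow2_ge_0.
      pose proof (Rmult_le_pos _ _ H2 H1).
      pose proof (pow2_ge_0 ((t-(a+b)/2)^2)). lra.
    + exists ((a+b)/2).
      replace (L*L/4 + d*d) with ((a-b)^2/4 + d*d) by (rewrite HL2; ring).
      field.
Qed.
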